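(* Every C*-algebra that is countably degree-2 saturated is countably quantifier-free saturated.
   Context: For $F\subseteq\mathbb R$ and $\varepsilon>0$ let $F_\varepsilon=\{x\in\mathbb R:\operatorname{dist}(x,F)\le\varepsilon\}$. For a class $\Phi$ of *-polynomials (noncommutative polynomials in variables $x_j,x_j^*$, $j\in\mathbb N$, with coefficients in the algebra), a C*-algebra $M$ is countably $\Phi$-saturated if for every sequence $P_n(\bar x)$ ($n\in\mathbb N$) of *-polynomials in $\Phi$ with coefficients in $M$ in variables $x_k$ ($k\in\mathbb N$) and every sequence of compact sets $K_n\subseteq\mathbb R$, the following are equivalent: (i) there are $b_k$ ($k\in\mathbb N$) in the unit ball of $M$ with $\|P_n(\bar b)\|\in K_n$ for all $n$; (ii) for every $m$ there are $b_k$ in the unit ball of $M$ with $\|P_n(\bar b)\|\in (K_n)_{1/m}$ for all $n\le m$. Countably degree-2 saturated means countably $\Phi$-saturated for $\Phi$ the *-polynomials of degree at most 2; countably quantifier-free saturated means countably $\Phi$-saturated for $\Phi$ the class of all *-polynomials. *)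

(* Defs.v *)
From Stdlib Require Import Reals Rtopology List.
Open Scope R_scope.

Definition C : Type := (R * R)%type.
Definition Cadd (z w : C) : C := (fst z + fst w, snd z + snd w).
Definition Cmul (z w : C) : C :=
  (fst z * fst w - snd z * snd w, fst z * snd w + snd z * fst w).
Definition Cconj (z : C) : C := (fst z, - snd z).
Definition Cmod (z : C) : R := sqrt (fst z ^ 2 + snd z ^ 2).
Definition C0 : C := (0, 0).
Definition C1 : C := (1, 0).

Record CStarAlgebra : Type := {
  car :> Type;
  zero : car;
  add : car -> car -> car;
  opp : car -> car;
  scal : C -> car -> car;
  mul : car -> car -> car;
  star : car -> car;
  norm : car -> R;
  add_assoc : forall x y z, add x (add y z) = add (add x y) z;
  add_comm : forall x y, add x y = add y x;
  add_zero : forall x, add x zero = x;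
  add_opp : forall x, add x (opp x) = zero;
  scal_one : forall x, scal C1 x = x;
  scal_assoc : forall a b x, scal a (scal b x) = scal (Cmul a b) x;
  scal_addl : forall a b x, scal (Cadd a b) x = add (scal a x) (scal b x);
  scal_addr : forall a x y, scal a (add x y) = add (scal a x) (scal a y);
  mul_assoc : forall x y z, mul x (mul y z) = mul (mul x y) z;
  mul_addl : forall x y z, mul (add x y) z = add (mul x z) (mul y z);
  mul_addr : forall x y z, mul x (add y z) = add (mul x y) (mul x z);
  mul_scall : forall a x y, mul (scal a x) y = scal a (mul x y);
  mul_scalr : forall a x y, mul x (scal a y) = scal a (mul x y);
  star_star : forall x, star (star x) = x;
  star_add : forall x y, star (add x y) = add (star x) (star y);
  star_scal : forall a x, star (scal a x) = scal (Cconj a) (star x);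
  star_mul : forall x y, star (mul x y) = mul (star y) (star x);
  norm_eq0 : forall x, norm x = 0 -> x = zero;
  norm_scal : forall a x, norm (scal a x) = Cmod a * norm x;
  norm_triangle : forall x y, norm (add x y) <= norm x + norm y;
  norm_submult : forall x y, norm (mul x y) <= norm x * norm y;
  complete : forall u : nat -> car,
    (forall eps, eps > 0 -> exists N, forall n m, (n >= N)%nat -> (m >= N)%nat ->
        norm (add (u n) (opp (u m))) < eps) ->
    exists l, forall eps, eps > 0 -> exists N, forall n, (n >= N)%nat ->
        norm (add (u n) (opp l)) < eps;
  cstar_id : forall x, norm (mul (star x) x) = norm x ^ 2
}.

(** A factor is either a coefficient from M or a variable letter
    (x_j if the flag is false, x_j^* if it is true).  A monomial is a complex
    scalar times a nonempty word of factors; a *-polynomial is a finite sum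
    of monomials. *)
Inductive factor (M : CStarAlgebra) : Type :=
| FCoef : M -> factor M
| FVar : nat -> bool -> factor M.
Arguments FCoef {M} _.
Arguments FVar {M} _ _.

Record monomial (M : CStarAlgebra) : Type := Mono {
  mono_scal : C;
  mono_head : factor M;
  mono_tail : list (factor M)
}.
Arguments Mono {M} _ _ _.
Arguments mono_scal {M} _.
Arguments mono_head {M} _.
Arguments mono_tail {M} _.

Definition starpoly (M : CStarAlgebra) : Type := list (monomial M).

Definition eval_factor {M : CStarAlgebra} (b : nat -> M) (f : factor M) : M :=
  match f with
  | FCoef a => a
  | FVar j false => b j
  | FVar j true => star M (b j)
  end.

Definition eval_monomial {M : CStarAlgebra} (b : nat -> M) (m : monomial M) : M :=
  scal M (mono_scal m)
    (fold_left (fun acc f => mul M acc (eval_factor b f))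
       (mono_tail m) (eval_factor b (mono_head m))).

Definition eval_poly {M : CStarAlgebra} (b : nat -> M) (P : starpoly M) : M :=
  fold_right (fun m acc => add M (eval_monomial b m) acc) (zero M) P.

Definition factor_deg {M : CStarAlgebra} (f : factor M) : nat :=
  match f with FCoef _ => 0%nat | FVar _ _ => 1%nat end.

Definition monomial_deg {M : CStarAlgebra} (m : monomial M) : nat :=
  (factor_deg (mono_head m) + fold_right (fun f n => factor_deg f + n) 0 (mono_tail m))%nat.

Definition deg_le2 {M : CStarAlgebra} (P : starpoly M) : Prop :=
  forall m, In m P -> (monomial_deg m <= 2)%nat.

Definition all_polys {M : CStarAlgebra} (P : starpoly M) : Prop := True.

(** F_eps = { x : dist(x, F) <= eps }, dist(x,F) = inf_{y in F} |x - y|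
    (with inf of the empty set = +infinity). *)
Definition eps_nbhd (F : R -> Prop) (eps : R) : R -> Prop :=
  fun x => forall d, d > 0 -> exists y, F y /\ Rabs (x - y) < eps + d.

Definition in_unit_ball {M : CStarAlgebra} (b : nat -> M) : Prop :=
  forall k, norm M (b k) <= 1.

Definition countably_saturated (M : CStarAlgebra) (Phi : starpoly M -> Prop) : Prop :=
  forall (P : nat -> starpoly M) (K : nat -> (R -> Prop)),
    (forall n, Phi (P n)) ->
    (forall n, compact (K n)) ->
    ((exists b : nat -> M, in_unit_ball b /\
        forall n, K n (norm M (eval_poly b (P n))))
     <->
     (forall m : nat, (1 <= m)%nat ->
        exists b : nat -> M, in_unit_ball b /\
          forall n, (n <= m)%nat ->
            eps_nbhd (K n) (/ INR m) (norm M (eval_poly b (P n))))).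

Definition countably_deg2_saturated (M : CStarAlgebra) : Prop :=
  countably_saturated M deg_le2.

Definition countably_qf_saturated (M : CStarAlgebra) : Prop :=
  countably_saturated M all_polys.

(* Main.v *)
Require Import Defs.
From Stdlib Require Import Reals Rtopology List.
From Stdlib Require Import Lra Lia Arith Cantor.

Section Alg.
Variable M : CStarAlgebra.

Lemma add0l (x : M) : add M (zero M) x = x.
Proof. rewrite add_comm; apply add_zero. Qed.

Lemma add_cancel (x y : M) : add M x y = x -> y = zero M.
Proof.
  intro H.
  transitivity (add M y (add M x (opp M x))).
  - rewrite add_opp; symmetry; apply add_zero.
  - rewrite add_assoc, (add_comm M y x), H. apply add_opp.
Qed.

Lemma scal_zeroC (z : Defs.C) (w : M) : fst z = 0 -> snd z = 0 -> scal M z w = zero M.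
Proof.
  intros H1 H2. apply (add_cancel (scal M z w)).
  rewrite <- scal_addl. f_equal. destruct z; simpl in *; subst; unfold Cadd; simpl; f_equal; ring.
Qed.

Lemma norm_zero : norm M (zero M) = 0.
Proof.
  rewrite <- (scal_zeroC (0,0) (zero M)) by reflexivity.
  rewrite norm_scal; unfold Cmod; simpl.
  replace (0*(0*1)+0*(0*1)) with 0 by ring. rewrite sqrt_0. ring.
Qed.

Lemma Copp_sum (a : Defs.C) (w : M) :
  add M (scal M a w) (scal M (- fst a, - snd a) w) = zero M.
Proof. rewrite <- scal_addl. apply scal_zeroC; simpl; ring. Qed.

Lemma constr_iff (x w : M) (a : Defs.C) :
  norm M (add M (scal M Defs.C1 x) (add M (scal M (- fst a, - snd a) w) (zero M))) = 0
  <-> x = scal M a w.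
Proof.
  rewrite scal_one, add_zero. split.
  - intro H. apply norm_eq0 in H.
    pose proof (Copp_sum a w) as H2.
    set (y := scal M (- fst a, - snd a) w) in *.
    rewrite <- (add_zero M x), <- H2, add_assoc, (add_comm M x), <- add_assoc, H, add_zero.
    reflexivity.
  - intros ->. rewrite Copp_sum. apply norm_zero.
Qed.

Lemma norm_nonneg (x : M) : 0 <= norm M x.
Proof.
  pose proof (norm_triangle M x (scal M (-1,0) x)) as H.
  rewrite (Copp_sum Defs.C1 x) in H || idtac.
  replace (add M x (scal M (-1, 0) x)) with (zero M) in H.
  2:{ rewrite <- (scal_one M x) at 1. rewrite <- (Copp_sum Defs.C1 x). unfold Defs.C1; simpl.
      f_equal. f_equal. f_equal; ring. }
  rewrite norm_zero, norm_scal in H. unfold Cmod in H; simpl in H.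
  replace (-1 * (-1 * 1) + 0 * (0 * 1)) with 1 in H by ring.
  rewrite sqrt_1 in H. lra.
Qed.

Lemma norm_star_le1 (x : M) : norm M x <= 1 -> norm M (star M x) <= 1.
Proof.
  intro H.
  pose proof (cstar_id M (star M x)) as E. rewrite star_star in E.
  pose proof (norm_submult M x (star M x)) as H2.
  pose proof (norm_nonneg x). pose proof (norm_nonneg (star M x)).
  nra.
Qed.

End Alg.

Definition ren {M : CStarAlgebra} (f : factor M) : factor M :=
  match f with FCoef a => FCoef a | FVar j s => FVar (2*j)%nat s end.
Definition gw {M : CStarAlgebra} (f : factor M) : R :=
  match f with FCoef a => 1 + norm M a | _ => 1 end.
Definition prodg {M : CStarAlgebra} (l : list (factor M)) : R :=
  fold_right (fun f r => gw f * r) 1 l.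
Definition Bm {M : CStarAlgebra} (m : monomial M) : R :=
  gw (mono_head m) * prodg (mono_tail m).
Definition step {M : CStarAlgebra} (b : nat -> M) :=
  fun acc f => mul M acc (eval_factor b f).
Definition pv {M : CStarAlgebra} (b : nat -> M) (m : monomial M) (j : nat) : M :=
  fold_left (step b) (firstn j (mono_tail m)) (eval_factor b (mono_head m)).

Local Open Scope nat_scope.
Definition code3 n i j := Cantor.to_nat (n, Cantor.to_nat (i, j)).
Definition dec3 c := let (n, c') := Cantor.of_nat c in (n, Cantor.of_nat c').
Definition zidx n i j := (2 * code3 n i j + 1)%nat.

Lemma dec3_code3 n i j : dec3 (code3 n i j) = (n, (i, j)).
Proof. unfold dec3, code3. rewrite !Cantor.cancel_of_to. reflexivity. Qed.

Lemma code3_surj c : exists n i j, c = code3 n i j.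
Proof.
  unfold code3. destruct (Cantor.of_nat c) as [n c'] eqn:E.
  destruct (Cantor.of_nat c') as [i j] eqn:E2.
  exists n, i, j. rewrite <- E2, Cantor.cancel_to_of, <- E, Cantor.cancel_to_of. reflexivity.
Qed.

Lemma even_double n : (Nat.even (2 * n) = true /\ Nat.div2 (2 * n) = n)%nat.
Proof.
  induction n as [|n IH]; [split; reflexivity|].
  replace (2 * S n) with (S (S (2 * n))) by lia.
  destruct IH as [H1 H2]; split; [exact H1 | cbn [Nat.div2]; rewrite H2; reflexivity].
Qed.

Lemma odd_double n : (Nat.even (2 * n + 1) = false /\ Nat.div2 (2 * n + 1) = n)%nat.
Proof.
  induction n as [|n IH]; [split; reflexivity|].
  replace (2 * S n + 1) with (S (S (2 * n + 1))) by lia.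
  destruct IH as [H1 H2]; split; [exact H1 | cbn [Nat.div2]; rewrite H2; reflexivity].
Qed.

Lemma parity q : ((exists n, q = 2 * n) \/ (exists n, q = 2 * n + 1))%nat.
Proof.
  induction q as [|q [[n ->]|[n ->]]].
  - left; exists 0; reflexivity.
  - right; exists n; lia.
  - left; exists (S n); lia.
Qed.

Local Open Scope R_scope.
Section Constr.
Variable M : CStarAlgebra.
Variable P : nat -> starpoly M.

Fixpoint mk (n i : nat) (l : list (monomial M)) : starpoly M :=
  match l with
  | nil => nil
  | m :: l' => Mono (Cmul (mono_scal m) (Bm m, 0)) (FVar (zidx n i (length (mono_tail m))) false) nil
               :: mk n (S i) l'
  end.

Definition cbody (n i j : nat) : starpoly M :=
  match nth_error (P n) i with
  | None => nil
  | Some mo =>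
    match j with
    | O => Mono Defs.C1 (FVar (zidx n i 0) false) nil
           :: Mono (- fst (/ Bm mo, 0), - snd (/ Bm mo, 0)) (ren (mono_head mo)) nil :: nil
    | S j' =>
      match nth_error (mono_tail mo) j' with
      | None => nil
      | Some t => Mono Defs.C1 (FVar (zidx n i (S j')) false) nil
                  :: Mono (- fst Defs.C1, - snd Defs.C1) (FVar (zidx n i j') false) (ren t :: nil) :: nil
      end
    end
  end.

Definition constr (c : nat) : starpoly M :=
  match dec3 c with (n, (i, j)) => cbody n i j end.

Definition Qp (q : nat) : starpoly M :=
  if Nat.even q then mk (Nat.div2 q) 0 (P (Nat.div2 q)) else constr (Nat.div2 q).

Definition zv (b : nat -> M) (c : nat) : M :=
  match dec3 c with (n, (i, j)) =>
    match nth_error (P n) i with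
    | Some mo => scal M (/ Bm mo, 0) (pv b mo j)
    | None => zero M
    end
  end.

Definition bext (b : nat -> M) (q : nat) : M :=
  if Nat.even q then b (Nat.div2 q) else zv b (Nat.div2 q).

End Constr.

Definition Kp (K : nat -> R -> Prop) (q : nat) : R -> Prop :=
  if Nat.even q then K (Nat.div2 q) else (fun x => 0 <= x <= 0).

Section Lemmas.
Variable M : CStarAlgebra.

Lemma eval_ren (b' b : nat -> M) (f : factor M) :
  (forall j, b' (2 * j)%nat = b j) -> eval_factor b' (ren f) = eval_factor b f.
Proof. intro H. destruct f as [a|j [|]]; cbn [ren eval_factor]; rewrite ?H; reflexivity. Qed.

Lemma gw_ge1 (f : factor M) : 1 <= gw f.
Proof. destruct f as [a|j s]; simpl; [pose proof (norm_nonneg M a)|]; lra. Qed.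

Lemma prodg_ge1 (l : list (factor M)) : 1 <= prodg l.
Proof.
  induction l as [|f l IH]; simpl; [lra|]. pose proof (gw_ge1 f). nra.
Qed.

Lemma factor_bound (b : nat -> M) (f : factor M) :
  in_unit_ball b -> norm M (eval_factor b f) <= gw f.
Proof.
  intro Hb. destruct f as [a|j [|]]; simpl.
  - lra.
  - apply norm_star_le1, Hb.
  - apply Hb.
Qed.

Lemma fold_bound (b : nat -> M) (l : list (factor M)) (x : M) :
  in_unit_ball b -> norm M (fold_left (step b) l x) <= norm M x * prodg l.
Proof.
  intro Hb. revert x. induction l as [|f l IH]; intro x; simpl.
  - lra.
  - eapply Rle_trans; [apply IH|]. unfold step.
    pose proof (norm_submult M x (eval_factor b f)).
    pose proof (factor_bound b f Hb). pose proof (prodg_ge1 l).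
    pose proof (norm_nonneg M x). pose proof (norm_nonneg M (eval_factor b f)).
    pose proof (norm_nonneg M (mul M x (eval_factor b f))).
    assert (norm M (mul M x (eval_factor b f)) <= norm M x * gw f) by nra.
    nra.
Qed.

Lemma prodg_firstn (j : nat) (l : list (factor M)) : prodg (firstn j l) <= prodg l.
Proof.
  revert l; induction j as [|j IH]; intro l; simpl.
  - apply prodg_ge1.
  - destruct l as [|f l]; simpl; [lra|]. pose proof (gw_ge1 f). pose proof (IH l). nra.
Qed.

Lemma Cmod_real (r : R) : 0 <= r -> Cmod (r, 0) = r.
Proof.
  intro H. unfold Cmod; simpl. replace (r * (r * 1) + 0 * (0 * 1)) with (r ^ 2) by ring.
  apply sqrt_pow2; exact H.
Qed.

Lemma Bm_ge1 (m : monomial M) : 1 <= Bm m.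
Proof. unfold Bm. pose proof (gw_ge1 (mono_head m)). pose proof (prodg_ge1 (mono_tail m)). nra. Qed.

Lemma pv_bound (b : nat -> M) (m : monomial M) (j : nat) :
  in_unit_ball b -> norm M (scal M (/ Bm m, 0) (pv b m j)) <= 1.
Proof.
  intro Hb. pose proof (Bm_ge1 m) as HB.
  rewrite norm_scal, Cmod_real by (left; apply Rinv_0_lt_compat; lra).
  unfold pv.
  pose proof (fold_bound b (firstn j (mono_tail m)) (eval_factor b (mono_head m)) Hb).
  pose proof (factor_bound b (mono_head m) Hb).
  pose proof (prodg_firstn j (mono_tail m)). pose proof (prodg_ge1 (firstn j (mono_tail m))).
  pose proof (norm_nonneg M (eval_factor b (mono_head m))).
  assert (norm M (fold_left (step b) (firstn j (mono_tail m)) (eval_factor b (mono_head m))) <= Bm m).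
  { unfold Bm. pose proof (gw_ge1 (mono_head m)). nra. }
  pose proof (norm_nonneg M (fold_left (step b) (firstn j (mono_tail m)) (eval_factor b (mono_head m)))).
  apply (Rmult_le_reg_l (Bm m)); [lra|]. rewrite <- Rmult_assoc, Rinv_r by lra. lra.
Qed.

Lemma firstn_snoc {A} (l : list A) (j : nat) (t : A) :
  nth_error l j = Some t -> firstn (S j) l = firstn j l ++ t :: nil.
Proof.
  revert l; induction j as [|j IH]; intros [|x l] H; simpl in *; try discriminate.
  - inversion H; reflexivity.
  - f_equal. apply IH in H. exact H.
Qed.

Lemma pv_S (b : nat -> M) (m : monomial M) (j : nat) (t : factor M) :
  nth_error (mono_tail m) j = Some t -> pv b m (S j) = mul M (pv b m j) (eval_factor b t).
Proof.
  intro H. unfold pv. rewrite (firstn_snoc _ _ _ H), fold_left_app. reflexivity.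
Qed.

Lemma pv_full (b : nat -> M) (m : monomial M) :
  eval_monomial b m = scal M (mono_scal m) (pv b m (length (mono_tail m))).
Proof. unfold pv. rewrite firstn_all. reflexivity. Qed.

Lemma mk_eval (P : nat -> starpoly M) (b' b : nat -> M) (n : nat) (l : list (monomial M)) (i : nat) :
  (forall i' m, nth_error l i' = Some m ->
     b' (zidx n (i + i') (length (mono_tail m))) = scal M (/ Bm m, 0) (pv b m (length (mono_tail m)))) ->
  eval_poly b' (mk M n i l) = eval_poly b l.
Proof.
  revert i; induction l as [|m l IH]; intros i H; [reflexivity|].
  simpl. f_equal.
  - unfold eval_monomial. cbn [mono_scal mono_head mono_tail fold_left eval_factor].
    specialize (H 0%nat m eq_refl).
    rewrite Nat.add_0_r in H. rewrite H, scal_assoc. unfold pv. rewrite firstn_all. f_equal.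
    pose proof (Bm_ge1 m). destruct (mono_scal m) as [c1 c2]. unfold Cmul; simpl.
    f_equal; field; lra.
  - apply IH. intros i' m' Hm. rewrite <- (H (S i') m' Hm). f_equal. f_equal. lia.
Qed.

End Lemmas.

Lemma factor_deg_le1 {M : CStarAlgebra} (f : factor M) : (factor_deg f <= 1)%nat.
Proof. destruct f; simpl; lia. Qed.

Lemma factor_deg_ren {M : CStarAlgebra} (f : factor M) : factor_deg (ren f) = factor_deg f.
Proof. destruct f; reflexivity. Qed.

Lemma Qp_deg (M : CStarAlgebra) (P : nat -> starpoly M) q : deg_le2 (Qp M P q).
Proof.
  unfold Qp. destruct (Nat.even q).
  - generalize 0%nat. generalize (P (Nat.div2 q)).
    intro l; induction l as [|mo l IH]; intros i m Hm; simpl in Hm; [contradiction|].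
    destruct Hm as [<-|Hm]; [unfold monomial_deg; simpl; lia|]. exact (IH _ m Hm).
  - unfold constr. destruct (dec3 (Nat.div2 q)) as [n [i j]]. unfold cbody.
    destruct (nth_error (P n) i) as [mo|]; [|intros m []].
    destruct j as [|j'].
    + intros m [<-|[<-|[]]]; unfold monomial_deg; simpl;
        [lia| rewrite factor_deg_ren; pose proof (factor_deg_le1 (mono_head mo)); lia].
    + destruct (nth_error (mono_tail mo) j') as [t|]; [|intros m []].
      intros m [<-|[<-|[]]]; unfold monomial_deg; simpl; [lia|].
      rewrite factor_deg_ren; pose proof (factor_deg_le1 t); lia.
Qed.

Lemma Kp_compact (K : nat -> R -> Prop) : (forall n, compact (K n)) -> forall q, compact (Kp K q).
Proof. intros HK q. unfold Kp. destruct (Nat.even q); [apply HK|apply compact_P3]. Qed.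

Theorem mainTheorem2 (M : CStarAlgebra) :
  countably_deg2_saturated M -> countably_qf_saturated M.
Proof.
  intros Hsat P K _ HK. split.
  - intros [b [Hb HKb]] m Hm. exists b; split; [exact Hb|].
    intros n _ d Hd. exists (norm M (eval_poly b (P n))). split; [apply HKb|].
    unfold Rminus; rewrite Rplus_opp_r, Rabs_R0.
    pose proof (lt_0_INR m ltac:(lia)). pose proof (Rinv_0_lt_compat _ H). lra.
  - intro Hii.
    assert (HQ : exists b', in_unit_ball b' /\ forall q, Kp K q (norm M (eval_poly b' (Qp M P q)))).
    { apply (proj2 (Hsat (Qp M P) (Kp K) (Qp_deg M P) (Kp_compact K HK))).
      intros m Hm. destruct (Hii m Hm) as [b [Hb Hn]].
      assert (Hev : forall j, bext M P b (2 * j)%nat = b j).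
      { intro j. unfold bext. destruct (even_double j) as [E1 E2]. rewrite E1, E2. reflexivity. }
      assert (Hz : forall n i j mo, nth_error (P n) i = Some mo ->
                 bext M P b (zidx n i j) = scal M (/ Bm mo, 0) (pv b mo j)).
      { intros n i j mo Hmo. unfold bext, zidx.
        destruct (odd_double (code3 n i j)) as [O1 O2]. rewrite O1, O2.
        unfold zv. rewrite dec3_code3, Hmo. reflexivity. }
      exists (bext M P b). split.
      - intro q. unfold bext. destruct (Nat.even q); [apply Hb|].
        unfold zv. destruct (dec3 (Nat.div2 q)) as [n [i j]].
        destruct (nth_error (P n) i) as [mo|]; [apply pv_bound; exact Hb|].
        rewrite norm_zero; lra.
      - intros q Hq. destruct (parity q) as [[k ->]|[c ->]].
        + unfold Qp, Kp. destruct (even_double k) as [E1 E2]. rewrite E1, E2.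
          rewrite (mk_eval M P (bext M P b) b k (P k) 0); [apply Hn; lia|].
          intros i' mo Hmo. apply Hz. exact Hmo.
        + unfold Qp, Kp. destruct (odd_double c) as [O1 O2]. rewrite O1, O2.
          destruct (code3_surj c) as (n & i & j & ->). unfold constr. rewrite dec3_code3.
          assert (E : norm M (eval_poly (bext M P b) (cbody M P n i j)) = 0).
          { unfold cbody. destruct (nth_error (P n) i) as [mo|] eqn:Hmo; [|apply norm_zero].
            destruct j as [|j'].
            - cbn [eval_poly fold_right eval_monomial mono_scal mono_head mono_tail fold_left].
              apply constr_iff. cbn [mono_scal mono_head mono_tail fold_left eval_factor]. rewrite (Hz _ _ _ _ Hmo).
              rewrite (eval_ren M _ b _ Hev). reflexivity.
            - destruct (nth_error (mono_tail mo) j') as [t|] eqn:Ht; [|apply norm_zero].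
              cbn [eval_poly fold_right eval_monomial mono_scal mono_head mono_tail fold_left].
              apply constr_iff. cbn [mono_scal mono_head mono_tail fold_left eval_factor]. rewrite scal_one.
              rewrite (Hz _ _ _ _ Hmo), (Hz _ _ _ _ Hmo), (eval_ren M _ b _ Hev).
              rewrite (pv_S M b mo j' t Ht), mul_scall. reflexivity. }
          rewrite E. intros d Hd. exists 0. split; [lra|].
          unfold Rminus; rewrite Rplus_opp_r, Rabs_R0.
          pose proof (lt_0_INR m ltac:(lia)). pose proof (Rinv_0_lt_compat _ H). lra. }
    destruct HQ as [b' [Hb' HK']].
    exists (fun j => b' (2 * j)%nat). split; [intro k; apply Hb'|].
    intro n. pose proof (HK' (2 * n)%nat) as H. unfold Qp, Kp in H.
    destruct (even_double n) as [E1 E2]. rewrite E1, E2 in H.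
    rewrite (mk_eval M P b' (fun j => b' (2 * j)%nat) n (P n) 0) in H; [exact H|].
    intros i' mo Hmo. simpl (0 + i')%nat.
    set (b := fun j => b' (2 * j)%nat).
    assert (Hev : forall j, b' (2 * j)%nat = b j) by reflexivity.
    assert (Hc : forall j, norm M (eval_poly b' (cbody M P n i' j)) = 0).
    { intro j. pose proof (HK' (zidx n i' j)) as Hq. unfold Qp, Kp, zidx in Hq.
      destruct (odd_double (code3 n i' j)) as [O1 O2]. rewrite O1, O2 in Hq.
      unfold constr in Hq. rewrite dec3_code3 in Hq. lra. }
    assert (Hall : forall j, (j <= length (mono_tail mo))%nat ->
              b' (zidx n i' j) = scal M (/ Bm mo, 0) (pv b mo j)).
    { induction j as [|j IH]; intro Hj.
      - pose proof (Hc 0%nat) as H0. unfold cbody in H0. rewrite Hmo in H0.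
        cbn [eval_poly fold_right eval_monomial mono_scal mono_head mono_tail fold_left] in H0.
        apply constr_iff in H0. cbn [mono_scal mono_head mono_tail fold_left eval_factor] in H0. rewrite H0, (eval_ren M _ b _ Hev).
        reflexivity.
      - assert (Hlt : (j < length (mono_tail mo))%nat) by lia.
        apply nth_error_Some in Hlt.
        destruct (nth_error (mono_tail mo) j) as [t|] eqn:Ht; [|contradiction].
        pose proof (Hc (S j)) as H0. unfold cbody in H0. rewrite Hmo, Ht in H0.
        cbn [eval_poly fold_right eval_monomial mono_scal mono_head mono_tail fold_left] in H0.
        apply constr_iff in H0. cbn [mono_scal mono_head mono_tail fold_left eval_factor] in H0. rewrite scal_one in H0.
        rewrite H0, IH by lia. rewrite (eval_ren M _ b _ Hev), (pv_S M b mo j t Ht), mul_scall.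
        reflexivity. }
    apply Hall. lia.
Qed.
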